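(* Let $B=(V,E,>)$ be a non-elementary $k$-simple ordered Bratteli diagram, let $X_B$ be its space of infinite paths and $\sigma:X_B\to X_B$ its Bratteli–Vershik map. Then $(X_B,\sigma)$ has exactly $k$ minimal subsets.
   Context: A Bratteli diagram $B=(V,E)$ has finite nonempty vertex sets $V^0=\{v_0\},V^1,V^2,\dots$ and finite edge sets $E^0,E^1,\dots$, with source and range maps $s(E^n)=V^n$, $r(E^n)=V^{n+1}$. Finite paths are sequences of consecutive edges; a vertex $w$ at level $m$ is connected to a vertex $v$ at level $n<m$ if some finite path goes from $v$ to $w$. $B$ is $k$-simple if for each $n\ge1$ there are pairwise disjoint $V^n_1,\dots,V^n_k\subseteq V^n$ with (i) $s(r^{-1}(v))\subseteq V^n_i$ for every $v\in V^{n+1}_i$; (ii) for each $i,n$ there is $m>n$ such that every vertex of $V^m_i$ is connected to every vertex of $V^n_i$. Put $V^n_o=V^n\setminus\bigcup_iV^n_i$. $B$ is non-elementary if for every $n$ there is $m>n$ such that the number of paths between any vertex of $V^n_o$ and any vertex of $V^m_o$ is either $0$ or at least $2$. An order on $B$ is a linear order on each $r^{-1}(v)$; it induces the lexicographic order on finite paths with common range (compare at the highest-level edge where they differ); $e+1$ denotes the successor of $e$. $E_{\max},E_{\min}$ are the maximal/minimal edges, $X_{\max},X_{\min}$ the infinite paths all of whose edges are maximal/minimal. $(V,E,>)$ is a $k$-simple ordered Bratteli diagram if: (1) $(V,E)$ is $k$-simple; (2) there are infinite paths $z_{i,\max},z_{i,\min}$ ($1\le i\le k$) whose level-$n$ vertices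 lie in $V^n_i$ for all $n\ge1$, with $X_{\max}=\{z_{1,\max},\dots,z_{k,\max}\}$, $X_{\min}=\{z_{1,\min},\dots,z_{k,\min}\}$; then there is $L$ such that for $n\ge L$ and $v\in V^n_o$ the maximal (resp. minimal) finite path from $v_0$ to $v$ passes at level $1$ through $V^1_i$ for some $i$, written $m_+(v)=i$ (resp. $m_-(v)=i$); (3) for $v\in V^n_o$: (a) for every edge $e$ with $s(e)=v$, $m_-(s(e+1))=m_+(v)$ (if $e$ is maximal, $s(e+1)$ means the level-$n$ source of the lexicographic successor of a non-maximal finite path starting with $e$ and ending at some level $m>n$); (b) if $e\notin E_{\max}$, $r(e)=v$, $s(e)\in V^{n-1}_i$ and $n\ge3$, then $m_-(s(e+1))=i$. The Vershik map: $\sigma(z_{i,\max})=z_{i,\min}$; for other $x=(x^1,x^2,\dots)$, let $d$ be least with $x^d$ not maximal, and set $\sigma(x)=(f^1,\dots,f^{d-1},x^d+1,x^{d+1},\dots)$ where $(f^1,\dots,f^{d-1})$ is the minimal path from $v_0$ to $s(x^d+1)$. $X_B$ carries the topology generated by cylinder sets and $\sigma$ is a homeomorphism. A minimal subset is a nonempty closed invariant set containing no nonempty proper closed invariant subset. *)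

(* Defs.v *)
From mathcomp Require Import all_boot.
Set Implicit Arguments.
Unset Strict Implicit.
Unset Printing Implicit Defensive.

Record bratteli := Bratteli {
  V : nat -> finType;
  E : nat -> finType;
  src : forall n, E n -> V n;
  rng : forall n, E n -> V n.+1;
  V0_single : #|V 0| = 1;
  V_nonempty : forall n, 0 < #|V n|;
  src_surj : forall n (v : V n), exists e, src e = v;
  rng_surj : forall n (v : V n.+1), exists e, @rng n e = v
}.

Unset Implicit Arguments.
Arguments src {b n} e.
Arguments rng {b n} e.

Section Defs.
Variable B : bratteli.

(* a "finite path" is represented by p : forall j, E B j, of which only the
   edges p n, ..., p (m-1) (levels n .. m-1) are relevant. *)
Definition epath := forall j, E B j.

Definition ends_at (p : epath) (m : nat) : V B m -> Prop :=
  match m return V B m -> Prop with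
  | 0 => fun _ => False
  | m'.+1 => fun w => rng (p m') = w
  end.

Definition fpath (n m : nat) (p : epath) (w : V B m) : Prop :=
  n < m /\
  (forall j, n <= j -> j.+1 < m -> rng (p j) = src (p j.+1)) /\
  ends_at p m w.

Definition path_between (n m : nat) (v : V B n) (w : V B m) (p : epath) : Prop :=
  fpath n m p w /\ src (p n) = v.

Definition connected (n m : nat) (v : V B n) (w : V B m) : Prop :=
  exists p, path_between n m v w p.

Definition zero_or_many_paths (n m : nat) (v : V B n) (w : V B m) : Prop :=
  (~ exists p, path_between n m v w p) \/
  (exists p q, path_between n m v w p /\ path_between n m v w q /\
               exists j, n <= j < m /\ p j <> q j).

(* k-simplicity: cls n v = Some i  means  v \in V^n_i ; None means v \in V^n_o.
   (The classes V^n_1,...,V^n_k are thus pairwise disjoint by construction.) *)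
Definition k_simple (k : nat) (cls : forall n, V B n -> option 'I_k) : Prop :=
  (forall n, 1 <= n -> forall (e : E B n) (i : 'I_k),
      cls n.+1 (rng e) = Some i -> cls n (src e) = Some i) /\
  (forall (i : 'I_k) n, 1 <= n -> exists m, n < m /\
      forall (v : V B n) (w : V B m),
        cls n v = Some i -> cls m w = Some i -> connected n m v w).

Definition non_elementary (k : nat) (cls : forall n, V B n -> option 'I_k) : Prop :=
  forall n, 1 <= n -> exists m, n < m /\
    forall (v : V B n) (w : V B m),
      cls n v = None -> cls m w = None -> zero_or_many_paths n m v w.

(* An order: ord n : E n -> nat ranks edges, injectively on each r^{-1}(v);
   the linear order on r^{-1}(v) is  e < e'  iff  ord e < ord e'. *)
Variable ord : forall n, E B n -> nat.

Definition is_order : Prop :=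
  forall n (e e' : E B n), rng e = rng e' -> ord n e = ord n e' -> e = e'.

Definition maxE n (e : E B n) : Prop :=
  forall e' : E B n, rng e' = rng e -> ord n e' <= ord n e.
Definition minE n (e : E B n) : Prop :=
  forall e' : E B n, rng e' = rng e -> ord n e <= ord n e'.
Definition succE n (e e' : E B n) : Prop :=
  rng e' = rng e /\ ord n e < ord n e' /\
  forall e'' : E B n, rng e'' = rng e -> ord n e < ord n e'' -> ord n e' <= ord n e''.

Definition lexlt (n m : nat) (p q : epath) : Prop :=
  exists j, n <= j < m /\ (forall i, j < i < m -> p i = q i) /\ ord j (p j) < ord j (q j).

Definition lexsucc (n m : nat) (w : V B m) (p q : epath) : Prop :=
  fpath n m p w /\ fpath n m q w /\ lexlt n m p q /\
  ~ (exists r, fpath n m r w /\ lexlt n m p r /\ lexlt n m r q).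

Definition maxpath (m : nat) (p : epath) (u : V B m) : Prop :=
  fpath 0 m p u /\ forall q, fpath 0 m q u -> ~ lexlt 0 m p q.
Definition minpath (m : nat) (p : epath) (u : V B m) : Prop :=
  fpath 0 m p u /\ forall q, fpath 0 m q u -> ~ lexlt 0 m q p.

Variable k : nat.
Variable cls : forall n, V B n -> option 'I_k.

Definition mplus (m : nat) (u : V B m) (i : 'I_k) : Prop :=
  exists p, maxpath m p u /\ cls 1 (rng (p 0)) = Some i.
Definition mminus (m : nat) (u : V B m) (i : 'I_k) : Prop :=
  exists p, minpath m p u /\ cls 1 (rng (p 0)) = Some i.

Definition XB := {x : epath | forall n, rng (x n) = src (x n.+1)}.
Definition pth (x : XB) : epath := proj1_sig x.

Definition k_simple_ordered (zmax zmin : 'I_k -> XB) : Prop :=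
  is_order /\
  k_simple k cls /\
  (forall i n, 1 <= n -> cls n (src (pth (zmax i) n)) = Some i) /\
  (forall i n, 1 <= n -> cls n (src (pth (zmin i) n)) = Some i) /\
  (forall x : XB, (forall n, maxE n (pth x n)) <->
                  exists i, forall n, pth x n = pth (zmax i) n) /\
  (forall x : XB, (forall n, minE n (pth x n)) <->
                  exists i, forall n, pth x n = pth (zmin i) n) /\
  (exists L,
     (forall n, L <= n -> 1 <= n -> forall v : V B n, cls n v = None ->
        (exists i, mplus n v i) /\ (exists i, mminus n v i)) /\
     (* (3)(a): for v in V^n_o and s(e) = v, m_-(s(e+1)) = m_+(v), where
        s(e+1) is the level-n source of the lexicographic successor q of a
        (non-maximal) finite path p from level n starting with e *)
     (forall n, L <= n -> 1 <= n -> forall v : V B n, cls n v = None ->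
        forall e : E B n, src e = v ->
        forall m (w : V B m) (p q : epath), p n = e -> lexsucc n m w p q ->
          exists i, mplus n v i /\ mminus n (src (q n)) i) /\
     (forall n', L <= n'.+1 -> 3 <= n'.+1 -> forall (e : E B n') (i : 'I_k),
        cls n'.+1 (rng e) = None -> ~ maxE n' e -> cls n' (src e) = Some i ->
        forall e', succE n' e e' -> mminus n' (src e') i)).

Definition vershik (zmax zmin : 'I_k -> XB) (x y : XB) : Prop :=
  (exists i, (forall n, pth x n = pth (zmax i) n) /\
             (forall n, pth y n = pth (zmin i) n)) \/
  (exists d, (forall j, j < d -> maxE j (pth x j)) /\ ~ maxE d (pth x d) /\
     succE d (pth x d) (pth y d) /\
     (forall j, d < j -> pth y j = pth x j) /\
     (d = 0 \/ minpath d (pth y) (src (pth y d)))).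

End Defs.

Definition is_open (B : bratteli) (U : XB B -> Prop) : Prop :=
  forall x, U x -> exists N, forall y : XB B,
    (forall n, n < N -> pth B y n = pth B x n) -> U y.
Definition is_closed (B : bratteli) (A : XB B -> Prop) : Prop :=
  is_open B (fun x => ~ A x).

Definition invariant (B : bratteli) (sigma : XB B -> XB B) (A : XB B -> Prop) : Prop :=
  forall x, A x <-> A (sigma x).

Definition minimal_set (B : bratteli) (sigma : XB B -> XB B) (A : XB B -> Prop) : Prop :=
  (exists x, A x) /\ is_closed B A /\ invariant B sigma A /\
  forall A' : XB B -> Prop, (forall x, A' x -> A x) ->
    (exists x, A' x) -> is_closed B A' -> invariant B sigma A' ->
    forall x, A x -> A' x.

(* Main.v *)
From Stdlib Require Import Classical FunctionalExtensionality ProofIrrelevance IndefiniteDescription Lia.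
Require Import Defs.
From mathcomp Require Import all_boot zify.

Lemma XB_eq (B : bratteli) (x y : XB B) : (forall n, pth B x n = pth B y n) -> x = y.
Proof.
case: x => x hx; case: y => y hy /= h.
have e : x = y by apply: functional_extensionality_dep.
subst y; by rewrite (proof_irrelevance _ hx hy).
Qed.

Definition upd (B : bratteli) (p : epath B) (m : nat) (e : E B m) : epath B :=
  fun j => match PeanoNat.Nat.eq_dec m j with
           | left h => eq_rect m (E B) e j h
           | right _ => p j end.

Lemma upd_eq B p m e : upd B p m e m = e.
Proof.
rewrite /upd; case: (PeanoNat.Nat.eq_dec m m) => [h|h]; last by [].
by rewrite (eq_irrelevance h erefl).
Qed.

Lemma upd_neq B p m e j : j <> m -> upd B p m e j = p j.
Proof.
rewrite /upd; case: (PeanoNat.Nat.eq_dec m j) => [h|h] //; by move=> /(_ (esym h)).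
Qed.

Lemma ex_in (B : bratteli) n (u : V B n.+1) : exists e : E B n, rng e == u.
Proof. by case: (rng_surj u) => e he; exists e; apply/eqP. Qed.

Definition pm (B : bratteli) (ord : forall n, E B n -> nat) n (u : V B n.+1) : E B n :=
  [arg max_(e > xchoose (ex_in B n u) | rng e == u) ord n e].

Lemma pm_spec B ord n (u : V B n.+1) :
  rng (pm B ord n u) = u /\ forall e', rng e' = u -> ord n e' <= ord n (pm B ord n u).
Proof.
rewrite /pm; case: arg_maxnP; first exact: (xchooseP (ex_in B n u)).
move=> e /eqP he hmax; split => // e' he'; apply: hmax; exact/eqP.
Qed.

Lemma pm_max B ord n u : maxE B ord n (pm B ord n u).
Proof. move=> e' he'; have [h1 h2] := pm_spec B ord n u; apply: h2; by rewrite he'. Qed.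

Lemma pm_rng B ord n u : rng (pm B ord n u) = u.
Proof. by have [] := pm_spec B ord n u. Qed.

Fixpoint mp (B : bratteli) ord (b : epath B) (M : nat) : V B M -> epath B :=
  match M with
  | 0 => fun _ => b
  | M'.+1 => fun w => upd B (mp B ord b M' (src (pm B ord M' w))) M' (pm B ord M' w)
  end.

Lemma mp_max B ord b M w j : j < M -> maxE B ord j (mp B ord b M w j).
Proof.
elim: M w => [|M IH] w //= hj.
case: (PeanoNat.Nat.eq_dec j M) => [->|hne]; first by rewrite upd_eq; apply: pm_max.
rewrite upd_neq //; apply: IH.
by lia.
Qed.

Lemma mp_end B ord b M w : rng (mp B ord b M.+1 w M) = w.
Proof. by rewrite /= upd_eq pm_rng. Qed.

Lemma mp_path B ord b M w j : j.+1 < M -> rng (mp B ord b M w j) = src (mp B ord b M w j.+1).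
Proof.
elim: M w => [|M IH] w //= hj.
case: (PeanoNat.Nat.eq_dec j.+1 M) => [e|hne].
  subst M; rewrite upd_eq upd_neq; last by lia.
  have := mp_end B ord b j (src (pm B ord j.+1 w)); by [].
have hj' : j.+1 < M by lia.
rewrite upd_neq ?upd_neq; try lia; exact: IH.
Qed.

Lemma mp_cons B ord b M w N j : N < M -> j < N ->
  mp B ord b M w j = mp B ord b N (src (mp B ord b M w N)) j.
Proof.
elim: M w => [|M IH] w //= hN hj.
have hjM : j <> M by lia.
rewrite upd_neq //.
case: (PeanoNat.Nat.eq_dec N M) => [e|hne].
  by subst N; rewrite upd_eq.
rewrite upd_neq //; apply: IH => //.
by lia.
Qed.

Definition glue (B : bratteli) (p q : epath B) (m : nat) : epath B :=
  fun j => if j < m then p j else q j.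

Definition agree_from (B : bratteli) (x y : epath B) m := forall j, m <= j -> x j = y j.

Lemma zstar_ok B ord (z : XB B) m :
  forall n, rng (glue B (mp B ord (pth B z) m (src (pth B z m))) (pth B z) m n)
          = src (glue B (mp B ord (pth B z) m (src (pth B z m))) (pth B z) m n.+1).
Proof.
move=> n; rewrite /glue.
case: (ltnP n.+1 m) => h1.
  rewrite (ltn_trans (ltnSn n) h1); exact: mp_path.
case: (ltnP n m) => h2.
  have e : m = n.+1 by lia.
  subst m; exact: mp_end.
exact: (proj2_sig z n).
Qed.

Definition zstar B ord (z : XB B) m : XB B :=
  exist _ (glue B (mp B ord (pth B z) m (src (pth B z m))) (pth B z) m) (zstar_ok B ord z m).

Lemma zstar_max B ord z m j : j < m -> maxE B ord j (pth B (zstar B ord z m) j).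
Proof. move=> h; rewrite /= /glue h; exact: mp_max. Qed.

Lemma zstar_agree B ord z m : agree_from B (pth B (zstar B ord z m)) (pth B z) m.
Proof. by move=> j h; rewrite /= /glue ltnNge h. Qed.

Lemma succ_uniq B ord n (e e1 e2 : E B n) : is_order B ord ->
  succE B ord n e e1 -> succE B ord n e e2 -> e1 = e2.
Proof.
move=> ho [r1 [o1 m1]] [r2 [o2 m2]].
apply: ho; first by rewrite r1 r2.
have := m1 e2 r2 o2; have := m2 e1 r1 o1; lia.
Qed.

Lemma sig_at B ord k zmax zmin sigma
  (hmaxc : forall x : XB B, (exists i, forall n, pth B x n = pth B (zmax i) n) ->
                            forall n, maxE B ord n (pth B x n))
  (hsig : forall x, vershik B ord k zmax zmin x (sigma x)) (z : XB B) m :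
  (forall j, j < m -> maxE B ord j (pth B z j)) -> ~ maxE B ord m (pth B z m) ->
  succE B ord m (pth B z m) (pth B (sigma z) m) /\
  agree_from B (pth B (sigma z)) (pth B z) m.+1.
Proof.
move=> hlt hnm; case: (hsig z) => [[i [h1 h2]]|[d [hd1 [hd2 [hd3 [hd4 _]]]]]].
  by case: hnm; apply: hmaxc; exists i.
have e : d = m.
  case: (ltngtP d m) => // h.
    by case: hd2; apply: hlt.
  by case: hnm; apply: hd1.
subst d; split => // j hj; by apply: hd4.
Qed.

Lemma step B ord k zmax zmin sigma (ho : is_order B ord)
  (hmaxc : forall x : XB B, (exists i, forall n, pth B x n = pth B (zmax i) n) ->
                            forall n, maxE B ord n (pth B x n))
  (hsig : forall x, vershik B ord k zmax zmin x (sigma x)) m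
  (IH : forall A, Defs.invariant B sigma A -> forall x x' : XB B,
          agree_from B (pth B x) (pth B x') m -> A x -> A x')
  A (hA : Defs.invariant B sigma A) (x : XB B) (Ax : A x) :
  forall n (e : E B m), ord m e < n -> rng e = rng (pth B x m) ->
    ord m (pth B x m) <= ord m e ->
    exists z, A z /\ pth B z m = e /\ agree_from B (pth B z) (pth B x) m.+1.
Proof.
elim=> [|n IHn] e // hn hr hle.
case: (ltngtP (ord m (pth B x m)) (ord m e)) => hc; last first.
- exists x; split => //; split => //; apply: ho => //.
- by move: hle; rewrite leqNgt hc.
pose e0 := [arg max_(e' > pth B x m | (rng e' == rng e) && (ord m e' < ord m e)) ord m e'].
have [he0r he0o he0m] : [/\ rng e0 = rng e, ord m e0 < ord m e &
     forall e', rng e' = rng e -> ord m e' < ord m e -> ord m e' <= ord m e0].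
  rewrite /e0; case: arg_maxnP; first by rewrite hr eqxx hc.
  move=> e1 /andP [/eqP h1 h2] h3; split => // e' h4 h5; apply: h3; by rewrite h4 eqxx h5.
have hsucc : succE B ord m e0 e.
  split; first by rewrite he0r.
  split => // e'' h1 h2; rewrite leqNgt; apply/negP => h3.
  have := he0m e'' (etrans h1 he0r) h3; lia.
have hxe0 : ord m (pth B x m) <= ord m e0 by apply: he0m => //; rewrite hr.
have [z [Az [hz1 hz2]]] := IHn e0 ltac:(lia) (etrans he0r hr) hxe0.
pose zs := zstar B ord z m.
have Azs : A zs by apply: (IH A hA z zs) => // j hj; rewrite (zstar_agree B ord z m j hj).
have hzsm : pth B zs m = e0 by rewrite (zstar_agree B ord z m m (leqnn m)).
have [hs ha] := sig_at B ord k zmax zmin sigma hmaxc hsig zs m (zstar_max B ord z m) ltac:(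
  rewrite hzsm => hmx; have := hmx e (esym he0r); lia).
exists (sigma zs); split; first exact: (proj1 (hA zs)).
split.
  apply: (succ_uniq B ord m e0) => //; by rewrite -hzsm.
move=> j hj; rewrite ha // (zstar_agree B ord z m j) ?hz2 //; lia.
Qed.

Lemma tail_inv B ord k zmax zmin sigma (ho : is_order B ord)
  (hmaxc : forall x : XB B, (exists i, forall n, pth B x n = pth B (zmax i) n) ->
                            forall n, maxE B ord n (pth B x n))
  (hsig : forall x, vershik B ord k zmax zmin x (sigma x)) m :
  forall A, Defs.invariant B sigma A -> forall x x' : XB B,
          agree_from B (pth B x) (pth B x') m -> A x -> A x'.
Proof.
elim: m => [|m IH] A hA x x' hag Ax.
  have -> : x' = x by apply: XB_eq => n; rewrite hag.
  done.
have hr : rng (pth B x m) = rng (pth B x' m).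
  move: (proj2_sig x m) (proj2_sig x' m); rewrite /pth in hag *; move=> -> ->; by rewrite hag.
have IH' : forall A, Defs.invariant B sigma A -> forall x x' : XB B,
          agree_from B (pth B x) (pth B x') m -> A x -> A x' by exact: IH.
case: (leqP (ord m (pth B x m)) (ord m (pth B x' m))) => hc.
  have [z [Az [hz1 hz2]]] := step B ord k zmax zmin sigma ho hmaxc hsig m IH' A hA x Ax
     (ord m (pth B x' m)).+1 (pth B x' m) (ltnSn _) (esym hr) hc.
  apply: (IH A hA z) => // j hj.
  case: (ltngtP j m) => h; first by lia.
    by rewrite hz2 // hag.
  by subst j.
apply: NNPP => nAx'.
have hA' : Defs.invariant B sigma (fun y => ~ A y) by move=> y; split => h1 h2; apply: h1; [exact: (proj2 (hA y)) | exact: (proj1 (hA y))].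
have [z [Az [hz1 hz2]]] := step B ord k zmax zmin sigma ho hmaxc hsig m IH' _ hA' x' nAx'
     (ord m (pth B x m)).+1 (pth B x m) (ltnSn _) hr (ltnW hc).
apply: (IH _ hA' z x) => // j hj.
case: (ltngtP j m) => h; first by lia.
  by rewrite hz2 // hag.
by subst j.
Qed.

Lemma mp_pm B ord b M w j : j < M -> mp B ord b M w j = pm B ord j (rng (mp B ord b M w j)).
Proof.
elim: M w => [|M IH] w //= hj.
case: (PeanoNat.Nat.eq_dec j M) => [->|hne]; first by rewrite upd_eq pm_rng.
rewrite upd_neq //; apply: IH; lia.
Qed.

Lemma fin_bound (T : finType) (P : T -> nat -> Prop) :
  (forall u K K', K <= K' -> P u K -> P u K') -> (forall u, exists K, P u K) ->
  exists K, forall u, P u K.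
Proof.
move=> hmon hex.
have : forall s : seq T, exists K, forall u, u \in s -> P u K.
  elim=> [|a s [K hK]]; first by exists 0.
  have [Ka hKa] := hex a.
  exists (maxn K Ka) => u; rewrite inE => /orP [/eqP ->|hu].
    apply: (hmon _ Ka) => //; exact: leq_maxr.
  apply: (hmon _ K); [exact: leq_maxl | exact: hK].
move=> /(_ (enum T)) [K hK]; exists K => u; apply: hK; by rewrite mem_enum.
Qed.

Definition dn B ord n (u : V B n.+1) : V B n := src (pm B ord n u).

Fixpoint br (B : bratteli) (f : forall n, V B n.+1 -> V B n) (G : forall n, V B n -> Prop)
  (h0 : exists u, G 0 u) (hs : forall n u, G n u -> exists u', G n.+1 u' /\ f n u' = u)
  (n : nat) : {u : V B n | G n u} :=
  match n with
  | 0 => let c := constructive_indefinite_description _ h0 in exist _ (proj1_sig c) (proj2_sig c)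
  | n'.+1 => let s := br B f G h0 hs n' in
       let c := constructive_indefinite_description _ (hs n' (proj1_sig s) (proj2_sig s)) in
       exist _ (proj1_sig c) (proj1 (proj2_sig c))
  end.

Lemma br_f B f G h0 hs n : f n (proj1_sig (br B f G h0 hs n.+1)) = proj1_sig (br B f G h0 hs n).
Proof.
rewrite /=; set c := constructive_indefinite_description _ _.
exact: (proj2 (proj2_sig c)).
Qed.

Lemma reach_max B ord k zmax zmin sigma (ho : is_order B ord)
  (hmaxe : forall x : XB B, (forall n, maxE B ord n (pth B x n)) <->
                  exists i, forall n, pth B x n = pth B (zmax i) n)
  (hsig : forall x, vershik B ord k zmax zmin x (sigma x))
  (A : XB B -> Prop) (x : XB B) (Ax : A x) (hcl : is_closed B A)
  (hA : Defs.invariant B sigma A) : exists i, A (zmax i).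
Proof.
have hmaxc : forall x : XB B, (exists i, forall n, pth B x n = pth B (zmax i) n) ->
                            forall n, maxE B ord n (pth B x n) by move=> z; apply hmaxe.
pose b := pth B x.
pose a M n := src (mp B ord b M (src (pth B x M)) n).
pose G n (u : V B n) := forall K, exists M, K <= M /\ n < M /\ a M n = u.
have ha : forall M n, n.+1 < M -> a M n = dn B ord n (a M n.+1).
  move=> M n h; rewrite /a /dn (mp_pm B ord b M _ n) ?(mp_path B ord b M) //; lia.
have h0 : forall n, exists u, G n u.
  move=> n; apply: NNPP => hn.
  have hb : forall u, exists K, forall M, K <= M -> n < M -> a M n <> u.
    move=> u; apply: NNPP => hu; apply: hn; exists u => K.
    apply: NNPP => hK; apply: hu; exists K => M h1 h2 h3; apply: hK; by exists M.
  have [K hK] := fin_bound (V B n) (fun u K => forall M, K <= M -> n < M -> a M n <> u)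
    ltac:(move=> u K K' hKK' hP M h1 h2; apply: hP => //; exact: leq_trans h1) hb.
  exact: (hK (a (maxn K n.+1) n) (maxn K n.+1) (leq_maxl _ _) (leq_maxr _ _) erefl).
have hs : forall n u, G n u -> exists u', G n.+1 u' /\ dn B ord n u' = u.
  move=> n u hu; apply: NNPP => hn.
  have hb : forall u', exists K, forall M, K <= M -> n.+1 < M -> a M n.+1 = u' -> dn B ord n u' <> u.
    move=> u'; case: (classic (dn B ord n u' = u)) => hd; last by exists 0.
    apply: NNPP => hu'; apply: hn; exists u'; split => // K.
    apply: NNPP => hK; apply: hu'; exists K => M h1 h2 h3 _; apply: hK; by exists M.
  have [K hK] := fin_bound (V B n.+1)
    (fun u' K => forall M, K <= M -> n.+1 < M -> a M n.+1 = u' -> dn B ord n u' <> u)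
    ltac:(move=> u' K K' hKK' hP M h1 h2; apply: hP => //; exact: leq_trans h1) hb.
  have [M [h1 [h2 h3]]] := hu (maxn K n.+2).
  apply: (hK (a M n.+1) M) => //.
  - by apply: leq_trans h1; rewrite leq_maxl.
  - by apply: leq_trans h1; rewrite leq_maxr.
  - by rewrite -ha // ; apply: leq_trans h1; rewrite leq_maxr.
pose bb := br B (dn B ord) G (h0 0) hs.
pose y0 n := pm B ord n (proj1_sig (bb n.+1)).
have y0ok : forall n, rng (y0 n) = src (y0 n.+1).
  move=> n; rewrite /y0 pm_rng; have := br_f B (dn B ord) G (h0 0) hs n.+1; by rewrite /dn.
pose y : XB B := exist _ y0 y0ok.
have [i hi] : exists i, forall n, pth B y n = pth B (zmax i) n.
  apply hmaxe => n; exact: pm_max.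
exists i; apply: NNPP => nA.
have [N hN] := hcl (zmax i) nA.
have [M [h1 [h2 h3]]] := proj2_sig (bb N) N.
apply: (hN (zstar B ord x M)); last first.
  apply: (tail_inv B ord k zmax zmin sigma ho hmaxc hsig M A hA x) => //.
  move=> j hj; by rewrite (zstar_agree B ord x M j hj).
have hbm : forall N j, j < N -> mp B ord b N (proj1_sig (bb N)) j = y0 j.
  elim=> [|N' IH] j hj //=.
  case: (PeanoNat.Nat.eq_dec j N') => [->|hne]; first by rewrite upd_eq.
  rewrite upd_neq //.
  have -> : src (pm B ord N' (proj1_sig (bb N'.+1))) = proj1_sig (bb N') by exact: br_f.
  apply: IH; lia.
move=> n hn; rewrite -hi /= /glue (ltn_trans hn h2).
rewrite (mp_cons B ord b M _ N n) // -/(a M N) h3; exact: hbm.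
Qed.

Definition Ci B k (cls : forall n, V B n -> option 'I_k) (i : 'I_k) (x : XB B) : Prop :=
  forall n, 1 <= n -> cls n (src (pth B x n)) = Some i.

Lemma down B k (cls : forall n, V B n -> option 'I_k)
  (hks1 : forall n, 1 <= n -> forall (e : E B n) (i : 'I_k),
      cls n.+1 (rng e) = Some i -> cls n (src e) = Some i)
  (y : XB B) i m : cls m (src (pth B y m)) = Some i ->
  forall n, 1 <= n <= m -> cls n (src (pth B y n)) = Some i.
Proof.
elim: m => [|m IH] hm n /andP [h1 h2]; first by lia.
case: (PeanoNat.Nat.eq_dec n m.+1) => [->|hne] //.
apply: IH; last by lia.
apply: hks1; first by lia.
by rewrite (proj2_sig y m).
Qed.

Lemma tail_C B k (cls : forall n, V B n -> option 'I_k)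
  (hks1 : forall n, 1 <= n -> forall (e : E B n) (i : 'I_k),
      cls n.+1 (rng e) = Some i -> cls n (src e) = Some i) (x y : XB B) d i :
  agree_from B (pth B x) (pth B y) d -> Ci B k cls i x -> Ci B k cls i y.
Proof.
move=> hag hx n hn.
apply: (down B k cls hks1 y i (maxn n d)); last by rewrite hn leq_maxl.
rewrite -hag ?leq_maxr //; apply: hx; apply: leq_trans hn _; exact: leq_maxl.
Qed.

Lemma K_lemma B ord k cls zmax zmin sigma (ho : is_order B ord)
  (hks : k_simple B k cls)
  (hmaxe : forall x : XB B, (forall n, maxE B ord n (pth B x n)) <->
                  exists i, forall n, pth B x n = pth B (zmax i) n)
  (hzmax : forall i n, 1 <= n -> cls n (src (pth B (zmax i) n)) = Some i)
  (hsig : forall x, vershik B ord k zmax zmin x (sigma x))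
  (A : XB B -> Prop) (x : XB B) (Ax : A x) (hcl : is_closed B A)
  (hA : Defs.invariant B sigma A) : exists i, forall y, Ci B k cls i y -> A y.
Proof.
have hmaxc : forall x : XB B, (exists i, forall n, pth B x n = pth B (zmax i) n) ->
                            forall n, maxE B ord n (pth B x n) by move=> z; apply hmaxe.
have [i Ai] := reach_max B ord k zmax zmin sigma ho hmaxe hsig A x Ax hcl hA.
exists i => y hy; apply: NNPP => nA.
have [N hN] := hcl y nA.
case: hks => hks1 hks2.
have [m [hm hconn]] := hks2 i N.+1 (ltn0Sn _).
have [p [[_ [hp1 hp2]] hp3]] := hconn (src (pth B y N.+1)) (src (pth B (zmax i) m))
   (hy _ (ltn0Sn _)) (hzmax i m ltac:(lia)).
pose z0 : epath B := fun j => if j < N.+1 then pth B y j else if j < m then p j else pth B (zmax i) j.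
have z0ok : forall n, rng (z0 n) = src (z0 n.+1).
  move=> n; rewrite /z0.
  case: (ltnP n.+1 N.+1) => h1.
    rewrite (ltn_trans (ltnSn n) h1); exact: (proj2_sig y n).
  case: (ltnP n N.+1) => h2.
    have e : n = N by lia.
    subst n; rewrite hm (proj2_sig y N) /=; by rewrite hp3.
  case: (ltnP n.+1 m) => h3.
    rewrite (ltn_trans (ltnSn n) h3); apply: hp1 => //.
  case: (ltnP n m) => h4; last exact: (proj2_sig (zmax i) n).
  have e : m = n.+1 by lia.
  subst m; exact: hp2.
pose z : XB B := exist _ z0 z0ok.
apply: (hN z); last first.
  apply: (tail_inv B ord k zmax zmin sigma ho hmaxc hsig m A hA (zmax i)) => //.
  move=> j hj; rewrite /= /z0 ltnNge (leq_trans _ hj) /=; last by lia.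
  by rewrite ltnNge hj.
move=> n hn; by rewrite /= /z0 (ltn_trans hn (ltnSn N)).
Qed.

Theorem theorem5p10 (B : bratteli) (k : nat)
  (ord : forall n, E B n -> nat) (cls : forall n, V B n -> option 'I_k)
  (zmax zmin : 'I_k -> XB B) (sigma : XB B -> XB B) :
  k_simple_ordered B ord k cls zmax zmin ->
  non_elementary B k cls ->
  (forall x, vershik B ord k zmax zmin x (sigma x)) ->
  exists M : 'I_k -> (XB B -> Prop),
    (forall i, minimal_set B sigma (M i)) /\
    (forall i j, (forall x, M i x <-> M j x) -> i = j) /\
    (forall A, minimal_set B sigma A -> exists i, forall x, A x <-> M i x).
Proof.
move=> [ho [hks [hzmax [hzmin [hmaxe [hmine _]]]]]] _ hsig.
have hks1 := proj1 hks.
have Cmax : forall i, Ci B k cls i (zmax i) by move=> i n hn; exact: hzmax.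
have Cmax_inv : forall i j, Ci B k cls i (zmax j) -> i = j.
  by move=> i j h; have := h 1 (leqnn 1); rewrite hzmax // => -[].
have Ccl : forall i, is_closed B (Ci B k cls i).
  move=> i x nC.
  have [n hn] : exists n, ~ (1 <= n -> cls n (src (pth B x n)) = Some i).
    by apply: NNPP => h; apply: nC => n; apply: NNPP => h'; apply: h; exists n.
  exists n.+1 => y hy hC; apply: hn => h1; rewrite -(hy n (ltnSn n)); exact: hC.
have Cinv : forall i, Defs.invariant B sigma (Ci B k cls i).
  move=> i x; case: (hsig x) => [[j [h1 h2]]|[d [_ [_ [_ [hd _]]]]]].
    have Ci_eq : forall y : XB B, (forall n, pth B y n = pth B (zmax j) n) \/
                                  (forall n, pth B y n = pth B (zmin j) n) ->
                 (Ci B k cls i y <-> i = j).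
      move=> y hy; split.
        move=> hC; have := hC 1 (leqnn 1).
        case: hy => ->; [rewrite hzmax // | rewrite hzmin //]; by case.
      move=> -> n hn; case: hy => ->; [exact: hzmax | exact: hzmin].
    rewrite (Ci_eq x (or_introl h1)) (Ci_eq (sigma x) (or_intror h2)); done.
  split; apply: (tail_C B k cls hks1 _ _ d.+1).
    by move=> j hj; rewrite hd.
  by move=> j hj; rewrite hd.
have hK : forall A : XB B -> Prop, (exists x, A x) -> is_closed B A ->
    Defs.invariant B sigma A -> exists i, forall y, Ci B k cls i y -> A y.
  move=> A [x Ax] hcl hA; exact: (K_lemma B ord k cls zmax zmin sigma ho hks hmaxe hzmax hsig A x).
exists (Ci B k cls); split; last split.
- move=> i; split; first by exists (zmax i).
  split; first exact: Ccl.
  split; first exact: Cinv.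
  move=> A' hsub hne hcl hA' x hx.
  have [j hj] := hK A' hne hcl hA'.
  have e : i = j by apply: Cmax_inv; apply: hsub; apply: hj; exact: Cmax.
  subst j; exact: hj.
- move=> i j h; apply: Cmax_inv; apply/h; exact: Cmax.
- move=> A [hne [hcl [hA hmin]]].
  have [i hi] := hK A hne hcl hA.
  exists i => x; split; last exact: hi.
  apply: (hmin (Ci B k cls i)) => //.
  all: try (by exists (zmax i); exact: Cmax).
  all: try exact: Ccl.
  all: exact: Cinv.
Qed.
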